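(* For every $n\ge 0$, if $B_n$ is the Boolean lattice of subsets of an $n$-element set, then $\mathcal{J}(B_n,t)=(t+1)^n$.
   Context: $B_n$ is ranked by cardinality with $\hat 0=\emptyset$ and $\hat 1$ the whole set, $\mathrm{rk}(B_n)=n$. Let $\delta_3(x,y,z)=1$ if $x=y=z$ and $0$ otherwise, let $J$ be the unique integer-valued function on triples $x\le y\le z$ with $\sum_{x\le a\le y\le b\le z}J(a,y,b)=\delta_3(x,y,z)$ for all $x\le y\le z$, and $\mathcal{J}(\mathcal{P},t)=(-1)^{\mathrm{rk}(\mathcal{P})}\sum_{x\in\mathcal{P}}J(\hat 0,x,\hat 1)\,t^{\mathrm{rk}(\mathcal{P})-\mathrm{rk}(x)}$. *)

(* Defs.v *)
From mathcomp Require Import all_boot all_order all_algebra.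
Set Implicit Arguments. Unset Strict Implicit. Unset Printing Implicit Defensive.
Import GRing.Theory.
Local Open Scope ring_scope.

(* The Boolean lattice B_n: subsets of 'I_n ordered by inclusion,
   bottom = set0, top = setT, rank x = #|x|, rk(B_n) = n. *)

Definition delta3 (n : nat) (x y z : {set 'I_n}) : int :=
  if (x == y) && (y == z) then 1 else 0.

Definition isJ (n : nat) (J : {set 'I_n} -> {set 'I_n} -> {set 'I_n} -> int) : Prop :=
  forall x y z : {set 'I_n}, x \subset y -> y \subset z ->
    \sum_(a : {set 'I_n} | (x \subset a) && (a \subset y))
      \sum_(b : {set 'I_n} | (y \subset b) && (b \subset z)) J a y b
    = delta3 x y z.

Definition calJ (n : nat) (J : {set 'I_n} -> {set 'I_n} -> {set 'I_n} -> int) : {poly int} :=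
  (-1) ^+ n * \sum_(x : {set 'I_n}) (J set0 x setT)%:P * 'X^(n - #|x|).

(* Main.v *)
Require Import Defs.
From mathcomp Require Import all_boot all_order all_algebra.
Import GRing.Theory.
Local Open Scope ring_scope.

Section S.
Variable n : nat.
Implicit Types x y a : {set 'I_n}.

Definition tog (i : 'I_n) a := if i \in a then a :\ i else i |: a.

Lemma togK i : involutive (tog i).
Proof.
move=> a; rewrite /tog; case: (boolP (i \in a)) => ia.
  by rewrite setD11 setD1K.
by rewrite setU11 setU1K.
Qed.

Lemma in_tog i a j : (j \in tog i a) = if j == i then i \notin a else j \in a.
Proof.
rewrite /tog; case: (boolP (i \in a)) => ia; case: eqP => [->|ne];
  rewrite ?in_setD1 ?in_setU1 ?eqxx ?ia //; by move/eqP: ne => /negbTE ->.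
Qed.

Lemma sub_tog i x a : i \notin x -> (x \subset tog i a) = (x \subset a).
Proof.
move=> ix; apply/subsetP/subsetP => H j jx; have := H j jx; rewrite in_tog;
  case: eqP => // ji; by move: ix; rewrite -ji jx.
Qed.

Lemma tog_sub i y a : i \in y -> (tog i a \subset y) = (a \subset y).
Proof.
move=> iy; apply/subsetP/subsetP => H j.
  move=> ja; case: (eqVneq j i) => [->//|ne]; apply: H; by rewrite in_tog (negbTE ne).
rewrite in_tog; case: eqP => [->//|_]; exact: H.
Qed.

Lemma card_tog i a : (-1) ^+ #|tog i a| = - (-1) ^+ #|a| :> int.
Proof.
rewrite /tog; case: (boolP (i \in a)) => ia.
  by rewrite (cardsD1 i a) ia exprS mulN1r opprK.
by rewrite cardsU1 ia exprS mulN1r.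
Qed.

Lemma alt_sum x y : x \subset y ->
  \sum_(a : {set 'I_n} | (x \subset a) && (a \subset y)) (-1) ^+ #|a| =
  (if x == y then (-1) ^+ #|x| else 0) :> int.
Proof.
move=> xy; case: eqP => [<-|ne].
  rewrite (big_pred1 x) => [//|a]; by rewrite /= eqEsubset andbC.
have : x \proper y.
  rewrite properEneq xy andbT; apply/eqP; exact: ne.
case/properP => _ [i iy ix].
set S := LHS.
have : S = - S.
  rewrite /S {1}(reindex_inj (can_inj (togK i))) /= -sumrN.
  apply: eq_big => a; first by rewrite sub_tog // tog_sub.
  by move=> _; rewrite card_tog.
move/eqP; rewrite -subr_eq0 opprK -mulr2n -mulr_natr mulf_eq0 => /orP[/eqP//|].
by [].
Qed.

Lemma if_sum (P : bool) (Q : pred {set 'I_n}) (F : {set 'I_n} -> int) :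
  (if P then \sum_(i | Q i) F i else 0) = \sum_i (if P && Q i then F i else 0).
Proof. case: P => /=; [by rewrite big_mkcond | by rewrite big1]. Qed.

Lemma sum2_cond (P Q : pred {set 'I_n}) (F : {set 'I_n} -> {set 'I_n} -> int) :
  \sum_x \sum_z (if P x && Q z then F x z else 0) = \sum_(x | P x) \sum_(z | Q z) F x z.
Proof.
rewrite [RHS]big_mkcond; apply: eq_bigr => x _.
case: (P x) => /=; [by rewrite [RHS]big_mkcond | by rewrite big1].
Qed.

Lemma sqr_sign (R : comPzRingType) k : (-1) ^+ k * (-1) ^+ k = 1 :> R.
Proof. by rewrite -exprMn mulrNN mulr1 expr1n. Qed.

End S.


Lemma key n (J : {set 'I_n} -> {set 'I_n} -> {set 'I_n} -> int) : isJ J ->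
  forall y, J set0 y setT = (-1) ^+ n.
Proof.
move=> HJ y.
pose c := fun x : {set 'I_n} => (-1) ^+ #|x| : int.
pose S := \sum_(x : {set 'I_n}) \sum_(z : {set 'I_n}) (if (x \subset y) && (y \subset z) then c x * c z *
   (\sum_(a : {set 'I_n} | (x \subset a) && (a \subset y))
      \sum_(b : {set 'I_n} | (y \subset b) && (b \subset z)) J a y b) else 0).
have E1 : S = 1.
  rewrite /S.
  transitivity (\sum_(x : {set 'I_n}) (if x == y then 1 else 0) : int); last first.
    by rewrite -big_mkcond big_pred1_eq.
  apply: eq_bigr => x _.
  transitivity (\sum_(z : {set 'I_n}) (if x == y then (if z == y then 1 else 0) else 0) : int).
    apply: eq_bigr => z _.
    case: ifP => [/andP[xy yz]|]; last first.
      case: (eqVneq x y) => [->|//]; case: (eqVneq z y) => [->|//].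
      by rewrite !subxx.
    rewrite HJ // /delta3.
    case: (eqVneq x y) => [->|]; case: (eqVneq y z) => [<-|] /=;
      rewrite ?eqxx ?mulr0 ?mulr1 ?sqr_sign //.
  case: (x == y); [by rewrite -big_mkcond big_pred1_eq | by rewrite big1].
have E2 : S = J set0 y setT * (-1) ^+ n.
  rewrite /S.
  transitivity (\sum_(x : {set 'I_n}) \sum_(z : {set 'I_n}) \sum_(a : {set 'I_n}) \sum_(b : {set 'I_n})
     (if ((x \subset y) && (y \subset z)) && (((x \subset a) && (a \subset y)) &&
          ((y \subset b) && (b \subset z))) then c x * c z * J a y b else 0)).
    apply: eq_bigr => x _; apply: eq_bigr => z _.
    rewrite mulr_sumr if_sum; apply: eq_bigr => a _.
    rewrite mulr_sumr if_sum andbA; apply: eq_bigr => b _.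
    by rewrite -!andbA.
  under eq_bigr => x _ do rewrite exchange_big.
  rewrite exchange_big.
  under eq_bigr => a _ do under eq_bigr => x _ do rewrite exchange_big.
  under eq_bigr => a _ do rewrite exchange_big.
  transitivity (\sum_(a : {set 'I_n}) \sum_(b : {set 'I_n}) (if (a \subset y) && (y \subset b) then
      J a y b * ((\sum_(x : {set 'I_n} | (set0 \subset x) && (x \subset a)) c x) *
                (\sum_(z : {set 'I_n} | (b \subset z) && (z \subset setT)) c z)) else 0)).
    apply: eq_bigr => a _; apply: eq_bigr => b _.
    case: ifP => [/andP[ay yb]|A]; last first.
      rewrite big1 // => x _; rewrite big1 // => z _.
      by move: A; case: (a \subset y); case: (y \subset b) => //= _; rewrite !andbF.
    transitivity (\sum_(x : {set 'I_n}) \sum_(z : {set 'I_n})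
       (if (x \subset a) && (b \subset z) then c x * c z * J a y b else 0)).
      apply: eq_bigr => x _; apply: eq_bigr => z _.
      rewrite ay yb /= !andbT.
      case xa: (x \subset a); case bz: (b \subset z); rewrite /= ?andbF //.
      by rewrite (subset_trans xa ay) (subset_trans yb bz).
    rewrite sum2_cond mulrC big_distrl big_distrl /=.
    apply: eq_big => x; first by rewrite sub0set.
    move=> _; rewrite big_distrr big_distrl /=.
    apply: eq_big => z; first by rewrite subsetT andbT.
    by [].
  transitivity (\sum_(a : {set 'I_n}) \sum_(b : {set 'I_n}) (if (a == set0) && (b == setT) then J a y b * (-1) ^+ n else 0)).
    apply: eq_bigr => a _; apply: eq_bigr => b _.
    case: ifP => [/andP[ay yb]|A].
      rewrite !alt_sum ?sub0set ?subsetT // /c cards0 expr0.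
      rewrite eq_sym; case: (a == set0); case: (eqVneq b setT) => [->|_];
        rewrite /= ?eqxx ?andbT ?andbF ?cardsT ?card_ord ?mulr0 ?mul0r ?mulr1 ?mul1r //; exact: mulr0.
    case: (eqVneq a set0) => [a0|] //=; case: (eqVneq b setT) => [b1|] //=.
    by rewrite a0 b1 sub0set subsetT in A.
  rewrite sum2_cond big_pred1_eq big_pred1_eq //.
have : J set0 y setT * (-1) ^+ n * (-1) ^+ n = (-1) ^+ n.
  by rewrite -E2 E1 mul1r.
by rewrite -mulrA sqr_sign mulr1.
Qed.

Lemma sum_pow n : \sum_(x : {set 'I_n}) 'X^(n - #|x|) = ('X + 1) ^+ n :> {poly int}.
Proof.
have cn : forall x : {set 'I_n}, (#|x| <= n)%N by move=> x; have := max_card x; rewrite card_ord.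
rewrite (reindex_inj (@setC_inj _)) /=.
under eq_bigr => x _ do rewrite (cardsCs (~: x)) setCK card_ord subKn ?cn //.
rewrite exprD1n (partition_big (fun x : {set 'I_n} => (inord #|x| : 'I_n.+1)) predT) //=.
apply: eq_bigr => k _.
rewrite (eq_bigl (fun x => x \in [set A : {set 'I_n} | #|A| == k])); last first.
  move=> x; rewrite inE; apply/eqP/eqP => [<-|H]; first by rewrite inordK // ltnS cn.
  by apply: val_inj; rewrite /= inordK // ltnS cn.
rewrite (eq_bigr (fun _ => 'X^k)); last by move=> x; rewrite inE => /eqP ->.
by rewrite sumr_const card_draws card_ord.
Qed.

Theorem proposition6p7 (n : nat) :
  (exists J, @isJ n J) /\
  (forall J, @isJ n J -> calJ J = ('X + 1) ^+ n).
Proof.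
split.
  exists (fun a _ b : {set 'I_n} => (-1) ^+ #|a| * (-1) ^+ #|b| : int).
  move=> x y z xy yz.
  under eq_bigr => a _ do rewrite -big_distrr /=.
  rewrite -big_distrl /= !alt_sum // /delta3.
  case: (eqVneq x y) => [exy|_]; case: (eqVneq y z) => [eyz|_] /=;
    rewrite ?exy ?sqr_sign ?mulr0 ?mul0r //; exact: mulr0.

move=> J HJ; rewrite /calJ.
under eq_bigr => x _ do rewrite (@key n J HJ) rmorphXn rmorphN rmorph1.
rewrite -big_distrr /= mulrA sqr_sign mul1r.
exact: sum_pow.
Qed.
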